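(* Consider the constrained online prediction problem and the \texttt{BanditQ} policy described in the context, with horizon $T$ and constant parameter $V_t=V=\Theta(\sqrt{T})$. For each $T$ let $\mathcal{I}=\mathcal{I}_T\subseteq[T]$ be an interval of consecutive rounds such that $T^{3/4}=o(|\mathcal{I}|)$ as $T\to\infty$. Then for every $i\in\mathcal{P}$, \[\liminf_{|\mathcal{I}|\to\infty}\ \frac{1}{|\mathcal{I}|}\sum_{t\in\mathcal{I}} r_i(t)\,x_i(t)\ \ge\ \lambda_i .\]
   Context: There are $N$ users. On each round $t=1,2,\dots$ an online policy chooses a probability vector $\bm{x}(t)=(x_1(t),\dots,x_N(t))$ in the standard simplex $\Delta_N=\{\bm{x}\in\mathbb{R}^N_{\ge 0}:\sum_i x_i=1\}$; afterwards an adversarially chosen reward vector $\bm{r}(t)=(r_1(t),\dots,r_N(t))\in[0,1]^N$ is revealed (full information), and the policy may use all past reward vectors to choose $\bm{x}(t+1)$. A subset $\mathcal{P}\subseteq[N]$ of protected users is given, with target rates $\lambda_i\in[0,1]$, $i\in\mathcal{P}$, satisfying $\sum_{i\in\mathcal{P}}\lambda_i\le 1$; set $\lambda_i=0$ for $i\notin\mathcal{P}$. The feasible set of stationary actions is $\Omega=\{\bm{x}^*\in\Delta_N : r_i(t)x^*_i\ge\lambda_i \text{ for all } i\in\mathcal{P} \text{ and all rounds } t\}$, which is assumed nonempty. The \texttt{BanditQ} policy: for each $i\in\mathcal{P}$ maintain $Q_i(0)=0$ and $Q_i(t)=\max\big(0,\,Q_i(t-1)+\lambda_i-r_i(t)x_i(t)\big)$;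 for $i\notin\mathcal{P}$ set $Q_i(t)=0$ for all $t$. Given a non-negative parameter sequence $(V_t)_{t\ge1}$, define surrogate rewards $r'_i(t)=(Q_i(t-1)+V_t)\,r_i(t)$ for all $i\in[N]$. Starting from an arbitrary $\bm{x}(1)\in\Delta_N$, the policy updates by adaptive online gradient ascent: $\bm{x}(t+1)=\Pi_{\Delta_N}\Big(\bm{x}(t)+\bm{r}'(t)\big/\sqrt{2\sum_{\tau=1}^{t}\|\bm{r}'(\tau)\|_2^2}\Big)$, where $\Pi_{\Delta_N}$ denotes Euclidean projection onto $\Delta_N$. *)

(* Defs.v *)
From HB Require Import structures.
From mathcomp Require Import all_boot all_order all_algebra.
From mathcomp Require Import all_classical all_reals all_analysis.
Set Implicit Arguments. Unset Strict Implicit. Unset Printing Implicit Defensive.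
Import Order.TTheory GRing.Theory Num.Theory.
Local Open Scope ring_scope.

Section BanditQ.
Variable R : realType.
Variable N : nat.

Definition in_simplex (x : 'I_N -> R) : Prop :=
  (forall i, 0 <= x i) /\ \sum_(i < N) x i = 1.

Definition sqdist (x y : 'I_N -> R) : R := \sum_(i < N) (x i - y i) ^+ 2.

Definition is_simplex_proj (y z : 'I_N -> R) : Prop :=
  in_simplex z /\ forall w, in_simplex w -> sqdist y z <= sqdist y w.

Variables (P : {set 'I_N}) (lam : 'I_N -> R).
(* rewards r t i = r_i(t), rounds t = 1, 2, ... ; x t i = x_i(t) *)
Variables (r : nat -> 'I_N -> R) (x : nat -> 'I_N -> R).

Fixpoint Q (i : 'I_N) (t : nat) : R :=
  match t with
  | 0 => 0
  | t'.+1 => if i \in P then Num.max 0 (Q i t' + lam i - r t i * x t i) else 0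
  end.

Definition surr (V : nat -> R) (t : nat) (i : 'I_N) : R :=
  (Q i t.-1 + V t) * r t i.

Definition banditQ_traj (V : nat -> R) : Prop :=
  in_simplex (x 1) /\
  forall t, (1 <= t)%N ->
    is_simplex_proj
      (fun i => x t i + surr V t i /
         Num.sqrt (2 * \sum_(1 <= tau < t.+1) \sum_(j < N) surr V tau j ^+ 2))
      (x t.+1).

End BanditQ.

(* Main.v *)
Require Import Defs.
From HB Require Import structures.
From mathcomp Require Import all_boot all_order all_algebra.
From mathcomp Require Import all_classical all_reals all_analysis.
From mathcomp Require Import ring lra.
Import Order.TTheory GRing.Theory Num.Theory.
Local Open Scope ring_scope.

Section Proj.
Variables (R : realType) (N : nat).

Lemma sqdist_split (y z w : 'I_N -> R) :
  sqdist y w = sqdist y z + sqdist z w + 2 * \sum_(i < N) (y i - z i) * (z i - w i).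
Proof.
rewrite /sqdist mulr_sumr -!big_split /=; apply: eq_bigr => i _; ring.
Qed.

Lemma proj_ineq (y z w : 'I_N -> R) :
  is_simplex_proj y z -> in_simplex w -> sqdist z w <= sqdist y w.
Proof.
move=> [[hz0 hz1] hmin] [hw0 hw1].
set p := \sum_(i < N) (y i - z i) * (w i - z i).
set D := sqdist w z.
have hD : 0 <= D by rewrite /D /sqdist; apply: sumr_ge0 => i _; exact: sqr_ge0.
suff hp : p <= 0.
  rewrite (sqdist_split y z w).
  have -> : \sum_(i < N) (y i - z i) * (z i - w i) = - p.
    rewrite /p -sumrN; apply: eq_bigr => i _; ring.
  have : 0 <= sqdist y z by apply: sumr_ge0 => i _; exact: sqr_ge0.
  lra.
rewrite leNgt; apply/negP => hp.
have hDp : 0 < D + p by lra.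
set e := p / (D + p).
have he0 : 0 < e by rewrite /e divr_gt0.
have he1 : e <= 1 by rewrite /e ler_pdivrMr // mul1r; lra.
have hmem : in_simplex (fun i => z i + e * (w i - z i)).
  split.
    move=> i; have := hz0 i; have := hw0 i => h1 h2; nra.
  rewrite big_split /= -mulr_sumr sumrB hz1 hw1; ring.
have := hmin _ hmem.
have -> : sqdist y (fun i => z i + e * (w i - z i)) =
   sqdist y z - 2 * e * p + e ^+ 2 * D.
  rewrite /sqdist /D /p /sqdist mulr_sumr mulr_sumr -sumrB -big_split /=.
  apply: eq_bigr => i _; ring.
move=> h.
have h2 : 2 * p <= e * D.
  have : e * (2 * p) <= e * (e * D) by nra.
  by rewrite ler_pM2l.
have : e * D * (D + p) = p * D by rewrite /e; field; lra.
nra.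
Qed.

Lemma simplex_le1 i (u : 'I_N -> R) : in_simplex u -> 0 <= u i <= 1.
Proof.
move=> [h0 h1]; rewrite h0 /= -h1 (bigD1 i) //= lerDl.
by apply: sumr_ge0 => j _.
Qed.

Lemma dist_le2 (u w : 'I_N -> R) : in_simplex u -> in_simplex w -> sqdist u w <= 2.
Proof.
move=> hu hw.
have -> : (2 : R) = \sum_(i < N) (u i + w i) by rewrite big_split /= hu.2 hw.2.
apply: ler_sum => i _.
have := @simplex_le1 i u hu; have := @simplex_le1 i w hw; nra.
Qed.

End Proj.
Arguments proj_ineq {R N y z w}.
Arguments dist_le2 {R N u w}.
Arguments simplex_le1 {R N} i {u}.
Arguments sqdist_split {R N}.

Section Core.
Variables (R : realType) (N : nat) (P : {set 'I_N}) (lam : 'I_N -> R)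
  (r : nat -> 'I_N -> R) (x : nat -> 'I_N -> R) (v : R) (xs : 'I_N -> R).
Hypothesis hr : forall t i, 0 <= r t i <= 1.
Hypothesis hlam : forall i, i \in P -> 0 <= lam i <= 1.
Hypothesis hsumlam : \sum_(i in P) lam i <= 1.
Hypothesis hxs : in_simplex xs.
Hypothesis hfeas : forall t i, (1 <= t)%N -> i \in P -> lam i <= r t i * xs i.
Hypothesis htraj : banditQ_traj P lam r x (fun _ => v).
Hypothesis hv : 0 <= v.

Local Notation Qf := (Q P lam r x).
Local Notation g := (surr P lam r x (fun _ => v)).
Definition nrm t := \sum_(j < N) g t j ^+ 2.
Definition S t := \sum_(1 <= tau < t.+1) nrm tau.
Definition a t := Num.sqrt (2 * S t).
Definition d t := sqdist (x t) xs.
Definition Phi t := \sum_(i < N) Qf i t ^+ 2.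
Definition G t := \sum_(i < N) g t i * (xs i - x t i).

Lemma simplex_x {t} : (1 <= t)%N -> in_simplex (x t).
Proof.
elim: t => // [[|t] IH _]; first exact: htraj.1.
exact: (htraj.2 t.+1 isT).1.
Qed.

Lemma Q_ge0 i t : 0 <= Qf i t.
Proof. case: t => //= t; case: ifP => _ //; by rewrite le_max lexx. Qed.

Lemma nrm_ge0 t : 0 <= nrm t.
Proof. by apply: sumr_ge0 => j _; exact: sqr_ge0. Qed.

Lemma S_ge0 t : 0 <= S t.
Proof. by apply: sumr_ge0 => j _; exact: nrm_ge0. Qed.

Lemma S_rec t : S t.+1 = S t + nrm t.+1.
Proof. by rewrite /S big_nat_recr. Qed.

Lemma a_ge0 t : 0 <= a t.
Proof. exact: sqrtr_ge0. Qed.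

Lemma a_sq t : a t ^+ 2 = 2 * S t.
Proof. by rewrite /a sqr_sqrtr // mulr_ge0 // S_ge0. Qed.

Lemma a_mono t u : (t <= u)%N -> a t <= a u.
Proof.
elim: u => [|u IH]; first by rewrite leqn0 => /eqP ->.
rewrite leq_eqVlt => /orP [/eqP -> //|/IH h].
apply: (le_trans h); rewrite /a ler_sqrt; last by rewrite mulr_ge0 // S_ge0.
by rewrite S_rec; have := nrm_ge0 u.+1; lra.
Qed.

Lemma d_le2 {t} : (1 <= t)%N -> d t <= 2.
Proof. by move=> ht; apply: dist_le2 => //; exact: simplex_x. Qed.

Lemma d_ge0 t : 0 <= d t.
Proof. by apply: sumr_ge0 => j _; exact: sqr_ge0. Qed.

Lemma ogd_step {t} : (1 <= t)%N ->
  G t <= a t * (d t - d t.+1) / 2 + nrm t / (2 * a t).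
Proof.
move=> ht.
have hproj := htraj.2 t ht.
have hle := proj_ineq hproj hxs.
have [a0|apos] := eqVneq (a t) 0.
  clear hproj hle.
  have hS : S t = 0.
    have := a_sq t; rewrite a0 expr0n /= => h; lra.
  have hn : nrm t = 0.
    move: hS; rewrite -(prednK ht) S_rec => h.
    have := S_ge0 t.-1; have := nrm_ge0 t.-1.+1; lra.
  have hg : forall j, g t j = 0.
    move=> j; have := @psumr_eq0P _ _ _ (fun j => g t j ^+ 2) (fun j _ => sqr_ge0 (g t j)) hn j isT.
    by move/eqP; rewrite sqrf_eq0 => /eqP.
  rewrite /G big1 ?a0 ?hn ?mul0r ?add0r //.
  by move=> j _; rewrite hg mul0r.
have ha : 0 < a t by rewrite lt_neqAle eq_sym apos a_ge0.
set b := (a t)^-1.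
have hab : a t * b = 1 by rewrite /b mulfV.
move: hle.
have -> : sqdist (fun i => x t i + g t i / a t) xs =
   d t - 2 * b * G t + b ^+ 2 * nrm t.
  rewrite /d /sqdist /G /nrm !mulr_sumr -sumrB -big_split /=.
  apply: eq_bigr => i _; rewrite /b; ring.
rewrite -/(d t.+1) => hle.
have -> : nrm t / (2 * a t) = nrm t * b / 2.
  by rewrite /b invfM; ring.
have hn := nrm_ge0 t.
have h2 : a t * d t.+1 <= a t * (d t - 2 * b * G t + b ^+ 2 * nrm t).
  by rewrite ler_pM2l.
have e : a t * (d t - 2 * b * G t + b ^+ 2 * nrm t) =
  a t * d t - 2 * (a t * b) * G t + (a t * b) * b * nrm t by ring.
move: h2; rewrite e hab => h2.
lra.
Qed.

Lemma a0 : a 0 = 0.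
Proof. by rewrite /a /S big_geq // mulr0 sqrtr0. Qed.

Lemma nrm_div t : nrm t.+1 / (2 * a t.+1) <= (a t.+1 - a t) / 2.
Proof.
have hm := @a_mono t t.+1 (leqnSn t).
have [z|nz] := eqVneq (a t.+1) 0.
  by rewrite z mulr0 invr0 mulr0; lra.
have ha : 0 < a t.+1 by rewrite lt_neqAle eq_sym nz a_ge0.
rewrite ler_pdivrMr; last by lra.
have h1 := a_sq t; have h2 := a_sq t.+1; have h3 := a_ge0 t.
rewrite S_rec in h2.
have := sqr_ge0 (a t.+1 - a t).
nra.
Qed.

Lemma regret T : \sum_(1 <= t < T.+1) G t <= 3 / 2 * a T - a T * d T.+1 / 2.
Proof.
elim: T => [|T IH]; first by rewrite big_geq // a0; lra.
rewrite big_nat_recr //=.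
have h1 := ogd_step (ltn0Sn T).
have h2 := nrm_div T.
have h3 := d_le2 (ltn0Sn T).
have h4 := @a_mono T T.+1 (leqnSn T).
have h5 := d_ge0 T.+2.
have h6 := a_ge0 T.
have h7 := d_ge0 T.+1.
have : (a T.+1 - a T) * d T.+1 <= (a T.+1 - a T) * 2.
  by apply: ler_wpM2l => //; lra.
nra.
Qed.

Lemma Q_notP i t : i \notin P -> Qf i t = 0.
Proof. by move=> hi; case: t => //= t; rewrite (negbTE hi). Qed.

Lemma drift_pt i t :
  Qf i t.+1 ^+ 2 <= Qf i t ^+ 2 + 2 * (g t.+1 i * (xs i - x t.+1 i) + v * x t.+1 i)
     + (if i \in P then lam i + x t.+1 i else 0).
Proof.
have hx := simplex_le1 i (simplex_x (ltn0Sn t)).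
have hxs0 := (hxs.1 i).
have hri := hr t.+1 i.
rewrite /surr /=.
case: ifP => hi; last first.
  rewrite (@Q_notP i t (negbT hi)).
  have : 0 <= v * (r t.+1 i * xs i) by rewrite mulr_ge0 // mulr_ge0 //; case/andP: hri.
  have : 0 <= v * (x t.+1 i * (1 - r t.+1 i)).
    by rewrite mulr_ge0 // mulr_ge0 //; case/andP: hri => _ h; case/andP: hx; lra.
  have -> : (0 : R) ^+ 2 = 0 by rewrite expr0n.
  lra.
set q := Qf i t.
set u := q + lam i - r t.+1 i * x t.+1 i.
have hq : 0 <= q by exact: Q_ge0.
have hm : Num.max 0 u ^+ 2 <= u ^+ 2.
  rewrite maxEle; case: ifP => // _; rewrite expr0n /=; exact: sqr_ge0.
apply: (le_trans hm).
have hl := hlam i hi.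
have hf := hfeas t.+1 i (ltn0Sn t) hi.
case/andP: hri => hr0 hr1; case/andP: hx => hx0 hx1; case/andP: hl => hl0 hl1.
have e1 : 0 <= q * (r t.+1 i * xs i - lam i) by apply: mulr_ge0 => //; lra.
have e2 : 0 <= v * (r t.+1 i * xs i) by rewrite mulr_ge0 // mulr_ge0.
have e3 : 0 <= v * (x t.+1 i * (1 - r t.+1 i)) by rewrite mulr_ge0 // mulr_ge0 //; lra.
have e4 : (lam i - r t.+1 i * x t.+1 i) ^+ 2 <= lam i + x t.+1 i.
  have f1 : lam i ^+ 2 <= lam i by nra.
  have f2 : r t.+1 i * x t.+1 i <= x t.+1 i by nra.
  have f3 : 0 <= r t.+1 i * x t.+1 i by nra.
  have f4 : (r t.+1 i * x t.+1 i) ^+ 2 <= r t.+1 i * x t.+1 i by nra.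
  have f5 : 0 <= lam i * (r t.+1 i * x t.+1 i) by nra.
  nra.
rewrite /u; nra.
Qed.

Lemma drift t : Phi t.+1 <= Phi t + 2 + 2 * v + 2 * G t.+1.
Proof.
apply: (le_trans (ler_sum _ (fun i _ => drift_pt i t))).
have H : \sum_(i < N) (if i \in P then lam i + x t.+1 i else 0) <= 1 + 1.
  rewrite -big_mkcond big_split /=; apply: lerD => //.
  rewrite -(simplex_x (ltn0Sn t)).2 [X in _ <= X](bigID (mem P)) /= lerDl.
  by apply: sumr_ge0 => i _; exact: (simplex_x (ltn0Sn t)).1.
move: H; set E := \sum_(i < N) (if _ then _ else _) => H.
rewrite !big_split /= -/E -!mulr_sumr big_split /= -mulr_sumr.
rewrite (simplex_x (ltn0Sn t)).2.
rewrite /Phi /G; lra.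
Qed.

Lemma Phi0 : Phi 0 = 0.
Proof. by rewrite /Phi big1 // => i _; rewrite expr0n. Qed.

Lemma Phi_ge0 t : 0 <= Phi t.
Proof. by apply: sumr_ge0 => i _; exact: sqr_ge0. Qed.

Lemma Phi_sum T : Phi T <= (2 + 2 * v) * T%:R + 2 * \sum_(1 <= t < T.+1) G t.
Proof.
elim: T => [|T IH]; first by rewrite Phi0 big_geq // mulr0 mulr0 addr0.
rewrite big_nat_recr //= mulrS.
have := drift T; lra.
Qed.

Lemma Phi_bound T : Phi T <= (2 + 2 * v) * T%:R + 3 * a T.
Proof.
have h1 := Phi_sum T; have h2 := regret T.
have : 0 <= a T * d T.+1 by rewrite mulr_ge0 // ?a_ge0 ?d_ge0.
lra.
Qed.

Lemma nrm_bound t : nrm t.+1 <= 2 * Phi t + 2 * (N%:R * v ^+ 2).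
Proof.
have E : \sum_(i < N) (2 * Qf i t ^+ 2 + 2 * v ^+ 2) = 2 * Phi t + 2 * (N%:R * v ^+ 2).
  rewrite big_split /= -mulr_sumr sumr_const card_ord -mulr_natl /Phi; ring.
rewrite -E /nrm.
apply: ler_sum => i _; rewrite /surr /=.
have hq := Q_ge0 i t; have := hr t.+1 i; case/andP => h0 h1.
have : (Qf i t + v) ^+ 2 * r t.+1 i ^+ 2 <= (Qf i t + v) ^+ 2 * 1.
  apply: ler_wpM2l; first exact: sqr_ge0.
  by rewrite -(expr1n _ 2) ler_pXn2r // ?nnegrE //; lra.
have := sqr_ge0 (Qf i t - v).
rewrite exprMn; nra.
Qed.

Lemma Q_le_Phi i t : Qf i t ^+ 2 <= Phi t.
Proof.
by rewrite /Phi (bigD1 i) //= lerDl; apply: sumr_ge0 => j _; exact: sqr_ge0.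
Qed.

Lemma core_bound T t i A : (t <= T)%N -> A = (2 + 2 * v) * T%:R ->
  Qf i t ^+ 4 <= 2 * A ^+ 2 + 18 * (8 * T%:R * A + 8 * T%:R * (N%:R * v ^+ 2)
     + 144 * T%:R ^+ 2).
Proof.
move=> htT hAdef.
have hv0 := hv.
have h2v : 0 <= 2 + 2 * v by lra.
have hA : 0 <= A.
  by rewrite hAdef mulr_ge0 ?ler0n // addr_ge0 // mulr_ge0.
have hPhi : forall u, (u <= T)%N -> Phi u <= A + 3 * a T.
  move=> u hu; apply: (le_trans (Phi_bound u)).
  have := @a_mono u T hu.
  have : (2 + 2 * v) * u%:R <= A.
    by rewrite hAdef; apply: (ler_wpM2l h2v); rewrite ler_nat.
  lra.
have hNv : 0 <= N%:R * v ^+ 2 by rewrite mulr_ge0 // sqr_ge0.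
have hS : forall u, (u <= T)%N -> S u <= u%:R * (2 * (A + 3 * a T) + 2 * (N%:R * v ^+ 2)).
  elim=> [|u IH] hu; first by rewrite /S big_geq // mul0r.
  rewrite S_rec mulrS.
  have := IH (ltnW hu); have := nrm_bound u; have := hPhi u (ltnW hu).
  lra.
have hT : 0 <= T%:R :> R by [].
have haT := a_sq T.
have haT0 := a_ge0 T.
have h1 := hS T (leqnn T).
have ha2 : a T ^+ 2 <= 8 * T%:R * A + 8 * T%:R * (N%:R * v ^+ 2) + 144 * T%:R ^+ 2.
  have := sqr_ge0 (a T - 12 * T%:R).
  nra.
have hQ := Q_le_Phi i t.
have hP := hPhi t htT.
have hq : Qf i t ^+ 4 = (Qf i t ^+ 2) ^+ 2 by rewrite -exprM.
have hQ2 : 0 <= Qf i t ^+ 2 by exact: sqr_ge0.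
have h3 : (Qf i t ^+ 2) ^+ 2 <= (A + 3 * a T) ^+ 2.
  by rewrite ler_pXn2r ?nnegrE //; lra.
have := sqr_ge0 (A - 3 * a T).
rewrite hq; nra.
Qed.

End Core.

Lemma sum_lower (R : realType) (N : nat) (P : {set 'I_N}) (lam : 'I_N -> R)
  (r : nat -> 'I_N -> R) (x : nat -> 'I_N -> R) i (s L : nat) :
  i \in P ->
  lam i * L%:R + Q P lam r x i s - Q P lam r x i (s + L)
    <= \sum_(s.+1 <= t < s.+1 + L) r t i * x t i.
Proof.
move=> hi; elim: L => [|L IH]; first by rewrite addn0 big_geq ?addn0 // mulr0; lra.
have E : \sum_(s.+1 <= t < (s.+1 + L).+1) r t i * x t i =
   \sum_(s.+1 <= t < s.+1 + L) r t i * x t i + r (s.+1 + L)%N i * x (s.+1 + L)%N i.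
  by rewrite big_nat_recr // leq_addr.
rewrite [(s.+1 + L.+1)%N]addnS E [(s + L.+1)%N]addnS -addSn mulrS.
have : Q P lam r x i (s.+1 + L) >= Q P lam r x i (s + L) + lam i - r (s.+1 + L)%N i * x (s.+1 + L)%N i.
  by rewrite addSn /= hi le_max lexx orbT.
lra.
Qed.

Lemma final_arith (R : realType) (w v c2 A n : R) :
  1 <= w -> 0 <= v -> v <= c2 * w -> 0 <= c2 -> 0 <= n -> A = (2 + 2 * v) * w ^+ 2 ->
  2 * A ^+ 2 + 18 * (8 * w ^+ 2 * A + 8 * w ^+ 2 * (n * v ^+ 2) + 144 * (w ^+ 2) ^+ 2)
  <= (2 * (2 + 2 * c2) ^+ 2 + 144 * (2 + 2 * c2) + 144 * n * c2 ^+ 2 + 2592) * w ^+ 6.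
Proof.
move=> hw hv hvc hc hn hA.
have w0 : 0 <= w by lra.
have w2 : 1 <= w ^+ 2 by nra.
have w3 : w ^+ 2 <= w ^+ 3 by rewrite exprS; nra.
have w4 : w ^+ 3 <= w ^+ 4 by rewrite [w ^+ 4]exprS; nra.
have w5 : w ^+ 4 <= w ^+ 5 by rewrite [w ^+ 5]exprS; nra.
have w6 : w ^+ 5 <= w ^+ 6 by rewrite [w ^+ 6]exprS; nra.
have hA0 : 0 <= A by rewrite hA; apply: mulr_ge0; [lra|exact: sqr_ge0].
have hA1 : A <= (2 + 2 * c2) * w ^+ 3.
  rewrite hA; have : (2 + 2 * v) <= (2 + 2 * c2) * w by nra.
  move=> h; have := ler_wpM2r (sqr_ge0 w) h.
  by rewrite -mulrA -exprS.
have e1 : A ^+ 2 <= (2 + 2 * c2) ^+ 2 * w ^+ 6.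
  have : A ^+ 2 <= ((2 + 2 * c2) * w ^+ 3) ^+ 2 by rewrite ler_pXn2r ?nnegrE //; nra.
  by rewrite exprMn -exprM.
have e2 : w ^+ 2 * A <= (2 + 2 * c2) * w ^+ 6.
  have := ler_wpM2l (sqr_ge0 w) hA1.
  rewrite mulrCA -exprD /=.
  have : 0 <= 2 + 2 * c2 by lra.
  move=> h0 h1; apply: (le_trans h1); apply: ler_wpM2l => //; lra.
have e3 : v ^+ 2 <= c2 ^+ 2 * w ^+ 2.
  by rewrite -exprMn ler_pXn2r ?nnegrE //; nra.
have e4 : w ^+ 2 * (n * v ^+ 2) <= n * c2 ^+ 2 * w ^+ 6.
  have h1 : n * v ^+ 2 <= n * (c2 ^+ 2 * w ^+ 2) by apply: ler_wpM2l.
  have h2 := ler_wpM2l (sqr_ge0 w) h1.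
  apply: (le_trans h2).
  have -> : w ^+ 2 * (n * (c2 ^+ 2 * w ^+ 2)) = (n * c2 ^+ 2) * w ^+ 4.
    by rewrite (_ : w ^+ 4 = w ^+ 2 * w ^+ 2); [ring | rewrite -exprD].
  apply: ler_wpM2l; first by apply: mulr_ge0 => //; exact: sqr_ge0.
  lra.
have e5 : (w ^+ 2) ^+ 2 <= w ^+ 6 by rewrite -exprM /=; lra.
nra.
Qed.

Theorem proposition2 (R : realType) (N : nat) (P : {set 'I_N}) (lam : 'I_N -> R)
  (r : nat -> 'I_N -> R)
  (V : nat -> R)
  (x : nat -> nat -> 'I_N -> R)
  (s L : nat -> nat) :
  (forall t i, 0 <= r t i <= 1) ->
  (forall i, i \in P -> 0 <= lam i <= 1) ->
  (forall i, i \notin P -> lam i = 0) ->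
  \sum_(i in P) lam i <= 1 ->
  (exists xs : 'I_N -> R, in_simplex xs /\
     forall t i, (1 <= t)%N -> i \in P -> lam i <= r t i * xs i) ->
  (exists c1 c2 : R, exists T0 : nat, 0 < c1 /\ 0 < c2 /\
     forall T : nat, (T0 <= T)%N ->
       c1 * Num.sqrt T%:R <= V T <= c2 * Num.sqrt T%:R) ->
  (forall T : nat, banditQ_traj P lam r (x T) (fun _ => V T)) ->
  (forall T : nat, (1 <= s T)%N /\ (s T + L T <= T.+1)%N) ->
  (forall eps : R, 0 < eps -> exists T0 : nat, forall T : nat, (T0 <= T)%N ->
     T%:R `^ (3 / 4) <= eps * (L T)%:R) ->
  forall i, i \in P ->
  forall eps : R, 0 < eps -> exists T0 : nat, forall T : nat, (T0 <= T)%N ->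
    lam i - eps <= (L T)%:R^-1 * \sum_(s T <= t < s T + L T) r t i * x T t i.
Proof.
move=> hr hlam _ hsum [xs [hxs hfeas]] [c1 [c2 [T0 [hc1 [hc2 hV]]]]] htraj hint ho
  i hi eps heps.
set K := 2 * (2 + 2 * c2) ^+ 2 + 144 * (2 + 2 * c2) + 144 * N%:R * c2 ^+ 2 + 2592.
have hK : 0 <= K.
  rewrite /K; have := sqr_ge0 (2 + 2 * c2); have := sqr_ge0 c2.
  have : 0 <= N%:R :> R by [].
  nra.
set e' := eps / (K + 1).
have he' : 0 < e' by rewrite /e' divr_gt0 //; lra.
have [T1 hT1] := ho e' he'.
exists (maxn (maxn T0 T1) 1) => T.
rewrite !geq_max => /andP [/andP [hT0 hTT1] hT1p].
have hTR : 1 <= T%:R :> R by rewrite ler1n.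
set w := Num.sqrt (T%:R : R).
have hw2 : w ^+ 2 = T%:R by rewrite sqr_sqrtr //; lra.
have hw1 : 1 <= w by rewrite -sqrtr1 ler_sqrt //; lra.
have [hv1 hv2] := andP (hV T hT0).
have hv : 0 <= V T by apply: le_trans hv1; apply: mulr_ge0; [exact: ltW | exact: sqrtr_ge0].
set p := (T%:R : R) `^ (3 / 4).
have hp0 : 0 <= p by exact: powR_ge0.
have hp4 : p ^+ 4 = w ^+ 6.
  rewrite -powR_mulrn // -powRrM.
  have -> : (3 / 4 * 4%:R : R) = 3%:R by field.
  by rewrite powR_mulrn ?ler0n // -hw2 -exprM.
have hpL : p <= e' * (L T)%:R := hT1 T hTT1.
have hpos : 0 < p by apply: powR_gt0; rewrite ltr0n.
have hL : 0 < (L T)%:R :> R.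
  have : 0 < e' * (L T)%:R by lra.
  by rewrite pmulr_rgt0.
have [hs1 hsL] := hint T.
set s' := (s T).-1.
have hs : s T = s'.+1 by rewrite /s' prednK.
have hlow := @sum_lower R N P lam r (x T) i s' (L T) hi.
have hQ0 := Q_ge0 _ _ P lam r (x T) i s'.
have htle : (s' + L T <= T)%N by move: hsL; rewrite hs addSn ltnS.
have hcb := @core_bound _ _ P lam r (x T) (V T) xs hr hlam hsum hxs hfeas (htraj T) hv T (s' + L T)%N i _ htle (erefl _).
have hfa := @final_arith R w (V T) c2 ((2 + 2 * V T) * w ^+ 2) N%:R hw1 hv hv2 (ltW hc2) (ler0n _ _) (erefl _).
rewrite hw2 in hfa.
set q := Q P lam r (x T) i (s' + L T).
have hq0 : 0 <= q by exact: Q_ge0.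
have hq4 : q ^+ 4 <= K * p ^+ 4.
  rewrite hp4; apply: (le_trans hcb); move: hfa; rewrite /K.
  by rewrite !mulrA.
have hqe : q <= eps * (L T)%:R.
  have h1 : p ^+ 4 <= (e' * (L T)%:R) ^+ 4 by rewrite ler_pXn2r ?nnegrE //; lra.
  have h2 : K <= (K + 1) ^+ 4.
    have : 1 <= (K + 1) ^+ 2 by nra.
    rewrite (_ : (K + 1) ^+ 4 = ((K + 1) ^+ 2) ^+ 2); last by rewrite -exprM.
    nra.
  have h3 : eps * (L T)%:R = (K + 1) * (e' * (L T)%:R) by rewrite /e'; field; lra.
  rewrite -(@ler_pXn2r _ 4) ?nnegrE //; last by nra.
  rewrite h3 exprMn.
  apply: (le_trans hq4).
  have : 0 <= p ^+ 4 by rewrite exprn_ge0.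
  have : 0 <= (e' * (L T)%:R) ^+ 4 by rewrite exprn_ge0 // mulr_ge0 //; lra.
  nra.
rewrite hs.
have hsum' : lam i * (L T)%:R - eps * (L T)%:R <= \sum_(s'.+1 <= t < s'.+1 + L T) r t i * x T t i.
  by move: hlow; rewrite -/q; lra.
have hLi : 0 <= (L T)%:R^-1 :> R by rewrite invr_ge0 ltW.
have := ler_wpM2l hLi hsum'.
have -> : (L T)%:R^-1 * (lam i * (L T)%:R - eps * (L T)%:R) = lam i - eps.
  by field; lra.
done.
Qed.
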